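(* Let $\mathcal G=(V,E)$ be a finite DAG in which every vertex has either $0$ or exactly $k$ parents, for a fixed $k\ge1$, and which has at least one vertex of depth one. Let $X$ be a BN with full support on $\mathcal G$ with states $\mathcal A$ whose non-trivial CPDs all coincide: for each $v\in V_p$ the parents are ordered as $(p_1(v),\dots,p_k(v))$ and there is a single kernel $Q:\mathcal A^k\times\mathcal A\to[0,1]$ with $\mathbb P(X_v=c\mid X_{p_1(v)}=a_1,\dots,X_{p_k(v)}=a_k)=Q(a_1,\dots,a_k;c)$ for all $v\in V_p$. Let $f:\mathcal A\to\mathcal B$ be a surjection and $U_v=f(X_v)$. Then (D3) holds if and only if for all $w,\tilde w\in\mathcal A^k$ with $f(w)=f(\tilde w)$ (coordinatewise) and all $b\in\mathcal B$, $\sum_{c\in f^{-1}(b)}Q(w;c)=\sum_{c\in f^{-1}(b)}Q(\tilde w;c)$.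
   Context: $pa(v)$ parents; $V_s$ parentless vertices, $V_p=V\setminus V_s$; $depth(v)$ maximal number of edges of a directed path from a vertex of $V_s$ to $v$. A BN on $\mathcal G$ with states $\mathcal A$ (finite) is specified by distributions $\alpha_v$ on $\mathcal A$ for $v\in V_s$ and CPDs $P_v(\cdot\mid a_{pa(v)})$ for $v\in V_p$; law $\prod_{v\in V_s}\alpha_v(x_v)\prod_{v\in V_p}P_v(x_v\mid x_{pa(v)})$; full support: all $x\in\mathcal A^V$ have positive probability. $\mathbb P_{\tilde\alpha}$ is the law with the same CPDs and initial distribution $\tilde\alpha$. (D3): for every initial distribution $\tilde\alpha$, $(U_v)$ under $\mathbb P_{\tilde\alpha}$ factorises over $\mathcal G$ (law of form $\prod_vq_v(u_v\mid u_{pa(v)})$), and for every $v\in V_p$, $b_v$, $b_{pa(v)}$ the value $\mathbb P_{\tilde\alpha}(U_v=b_v\mid U_{pa(v)}=b_{pa(v)})$ is the same for all $\tilde\alpha$ with $\mathbb P_{\tilde\alpha}(U_{pa(v)}=b_{pa(v)})>0$. *)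

(* Defs.v *)
From mathcomp Require Import all_boot all_order all_algebra.
Set Implicit Arguments. Unset Strict Implicit. Unset Printing Implicit Defensive.
Import Order.TTheory GRing.Theory Num.Theory.
Local Open Scope ring_scope.

(* A DAG on the finite vertex set V in which every vertex has either no parent
   (par v = None) or exactly k parents, given in order as p : 'I_k -> V
   (par v = Some p, with p injective). *)

Definition edge (V : finType) (k : nat) (par : V -> option {ffun 'I_k -> V}) : rel V :=
  fun u v => if par v is Some p then u \in codom p else false.

Definition is_dag (V : finType) (k : nat) (par : V -> option {ffun 'I_k -> V}) : Prop :=
  forall u v, edge par u v -> ~~ connect (edge par) v u.

Definition depth_path (V : finType) (k : nat) (par : V -> option {ffun 'I_k -> V})
  (v : V) (n : nat) : Prop :=
  exists (x : V) (s : seq V),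
    par x = None /\ path (edge par) x s /\ last x s = v /\ size s = n.

Definition has_depth (V : finType) (k : nat) (par : V -> option {ffun 'I_k -> V})
  (v : V) (n : nat) : Prop :=
  depth_path par v n /\ forall m, depth_path par v m -> (m <= n)%N.

Definition is_init_distr (R : realFieldType) (V A : finType) (k : nat)
  (par : V -> option {ffun 'I_k -> V}) (alpha : V -> A -> R) : Prop :=
  forall v, par v = None -> (forall a, 0 <= alpha v a) /\ \sum_(a : A) alpha v a = 1.

Definition is_kernel (R : realFieldType) (A : finType) (k : nat)
  (Q : {ffun 'I_k -> A} -> A -> R) : Prop :=
  forall w, (forall c, 0 <= Q w c) /\ \sum_(c : A) Q w c = 1.

Definition joint (R : realFieldType) (V A : finType) (k : nat)
  (par : V -> option {ffun 'I_k -> V}) (alpha : V -> A -> R)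
  (Q : {ffun 'I_k -> A} -> A -> R) (x : {ffun V -> A}) : R :=
  \prod_(v : V) match par v with
                | None => alpha v (x v)
                | Some p => Q [ffun i => x (p i)] (x v)
                end.

Definition prob (R : realFieldType) (V A : finType) (k : nat)
  (par : V -> option {ffun 'I_k -> V}) (alpha : V -> A -> R)
  (Q : {ffun 'I_k -> A} -> A -> R) (E : pred {ffun V -> A}) : R :=
  \sum_(x | E x) joint par alpha Q x.

Definition factorises_U (R : realFieldType) (V A B : finType) (k : nat)
  (par : V -> option {ffun 'I_k -> V}) (Q : {ffun 'I_k -> A} -> A -> R)
  (f : A -> B) (alpha : V -> A -> R) : Prop :=
  exists (r : V -> B -> R) (q : V -> {ffun 'I_k -> B} -> B -> R),
    (forall v, par v = None -> (forall b, 0 <= r v b) /\ \sum_(b : B) r v b = 1) /\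
    (forall v p, par v = Some p -> forall w,
        (forall b, 0 <= q v w b) /\ \sum_(b : B) q v w b = 1) /\
    (forall u : {ffun V -> B},
        prob par alpha Q (fun x => [forall v, f (x v) == u v]) =
        \prod_(v : V) match par v with
                      | None => r v (u v)
                      | Some p => q v [ffun i => u (p i)] (u v)
                      end).

Definition Epa (V A B : finType) (k : nat) (f : A -> B) (p : {ffun 'I_k -> V})
  (bs : {ffun 'I_k -> B}) : pred {ffun V -> A} :=
  fun x => [forall i, f (x (p i)) == bs i].

Definition D3 (R : realFieldType) (V A B : finType) (k : nat)
  (par : V -> option {ffun 'I_k -> V}) (Q : {ffun 'I_k -> A} -> A -> R)
  (f : A -> B) : Prop :=
  (forall alpha', is_init_distr par alpha' -> factorises_U par Q f alpha') /\
  (forall v p, par v = Some p ->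
     forall (b : B) (bs : {ffun 'I_k -> B}) (alpha1 alpha2 : V -> A -> R),
       is_init_distr par alpha1 -> is_init_distr par alpha2 ->
       0 < prob par alpha1 Q (Epa f p bs) ->
       0 < prob par alpha2 Q (Epa f p bs) ->
       prob par alpha1 Q (fun x => Epa f p bs x && (f (x v) == b))
         / prob par alpha1 Q (Epa f p bs)
       = prob par alpha2 Q (fun x => Epa f p bs x && (f (x v) == b))
         / prob par alpha2 Q (Epa f p bs)).

(* Main.v *)
Require Import Defs.
From mathcomp Require Import all_boot all_order all_algebra.
From mathcomp Require Import ring lra.
Set Implicit Arguments. Unset Strict Implicit. Unset Printing Implicit Defensive.
Import Order.TTheory GRing.Theory Num.Theory.
Local Open Scope ring_scope.

Section Gen.
Variables (V A : finType).
Notation X := {ffun V -> A}.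

Definition upd (x : X) (s : V) (c : A) : X := [ffun y => if y == s then c else x y].

Lemma upd_s x s c : upd x s c s = c.
Proof. by rewrite ffunE eqxx. Qed.
Lemma upd_ne x s c y : y != s -> upd x s c y = x y.
Proof. by rewrite ffunE => /negPf->. Qed.
Lemma upd_upd x s a c : upd (upd x s a) s c = upd x s c.
Proof. by apply/ffunP=> y; rewrite !ffunE; case: eqP. Qed.
Lemma upd_id x s : upd x s (x s) = x.
Proof. by apply/ffunP=> y; rewrite !ffunE; case: eqP => [->|]. Qed.

Lemma forall_inD1 (S : {set V}) s (P : pred V) : s \in S ->
  [forall y in S, P y] = P s && [forall y in S :\ s, P y].
Proof.
move=> Hs; apply/forall_inP/andP => [H|[H1 /forall_inP H2] y Hy].
  split; first exact: H.
  by apply/forall_inP=> y /setD1P [_ Hy]; exact: H.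
case: (eqVneq y s) => [->//|ne]; apply: H2; by rewrite !inE ne Hy.
Qed.

Variable R : realFieldType.

Lemma sum_upd (F : X -> R) s a0 :
  \sum_(x : X) F x = \sum_(x : X | x s == a0) \sum_(c : A) F (upd x s c).
Proof.
rewrite (partition_big (fun x => upd x s a0) (fun y => y s == a0)); last first.
  by move=> x _; rewrite upd_s.
apply: eq_bigr => y /eqP ys.
rewrite (partition_big (fun x : X => x s) predT) //=.
apply: eq_bigr => c _.
apply: big_pred1 => x /=.
apply/andP/eqP => [[/eqP <- /eqP <-]|->].
  by rewrite upd_upd upd_id.
by split; apply/eqP; rewrite ?upd_s // upd_upd -ys upd_id.
Qed.

Variables (k : nat) (par : V -> option {ffun 'I_k -> V}).
Hypothesis hdag : is_dag par.

Lemma edge_neq y w : edge par y w -> y != w.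
Proof. move=> e; apply/eqP=> E; subst; by move: (hdag e); rewrite connect0. Qed.

Lemma source_ex (S : {set V}) : S != set0 ->
  exists2 s, s \in S & forall y, edge par y s -> y \notin S.
Proof.
case/set0Pn => s0 Hs0.
case: (arg_minnP (fun s => #|[set z | connect (edge par) z s]|) Hs0) => s Hs Hmin.
exists s => // y e; apply/negP => Hy.
have := Hmin y Hy; apply/negP; rewrite -ltnNge.
apply: proper_card; apply/properP; split.
  apply/subsetP=> z; rewrite !inE => Hz; exact: connect_trans Hz (connect1 e).
exists s; rewrite !inE ?connect0 //; exact: hdag e.
Qed.

Variable g : V -> X -> R.
Hypothesis hloc : forall w (x x' : X), x w = x' w ->
  (forall y, edge par y w -> x y = x' y) -> g w x = g w x'.

Definition agree_off (S : {set V}) (x x' : X) := forall y, y \notin S -> x y = x' y.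

Lemma lump n : forall (S : {set V}), #|S| = n ->
  forall (E : pred X) (G : X -> R) (K : V -> pred A) (h : V -> R) (y0 : X),
  (forall x x' : X, agree_off S x x' -> E x = E x') ->
  (forall x x' : X, agree_off S x x' -> G x = G x') ->
  (forall s (x : X), s \in S -> E x -> (forall y, edge par y s -> y \in S -> K y (x y)) ->
      \sum_(c | K s c) g s (upd x s c) = h s) ->
  \sum_(x | E x && [forall y in S, K y (x y)]) G x * \prod_(w in S) g w x
  = (\prod_(w in S) h w) * \sum_(x | E x && [forall y in S, x y == y0 y]) G x.
Proof.
elim: n => [|n IH] S HS E G K h y0 HE HG Hh.
  have -> : S = set0 by apply/eqP; rewrite -cards_eq0 HS.
  have F0 : forall P : pred V, [forall y in set0, P y].
    by move=> P; apply/forall_inP=> y; rewrite in_set0.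
  rewrite big_set0 mul1r; apply: eq_big => [x|x _]; first by rewrite !F0.
  by rewrite big_set0 mulr1.
have /source_ex [s Hs Hsrc] : S != set0 by rewrite -card_gt0 HS.
set S' := S :\ s.
have HS' : #|S'| = n by move: HS; rewrite (cardsD1 s) Hs => -[].
have sub x x' : agree_off S' x x' -> agree_off S x x'.
  by move=> H y Hy; apply: H; rewrite in_setD1 (negPf Hy) andbF.
have Hgs x x' : agree_off S' x x' -> g s x = g s x'.
  move=> H; apply: hloc; first by apply: H; rewrite in_setD1 eqxx.
  by move=> y e; apply: H; rewrite in_setD1 (negPf (Hsrc y e)) andbF.
transitivity (\sum_(x | (E x && K s (x s)) && [forall y in S', K y (x y)])
                 (G x * g s x) * \prod_(w in S') g w x).
  apply: eq_big => [x|x _]; first by rewrite (forall_inD1 _ Hs) andbA.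
  by rewrite (big_setD1 s Hs) mulrA.
rewrite (IH S' HS' (fun x => E x && K s (x s)) (fun x => G x * g s x) K h y0);
  first last.
- move=> s' x Hs' /andP [Ex Ks] Hpar; apply: Hh => //.
    by move: Hs'; rewrite in_setD1 => /andP[].
  move=> y e Hy; case: (eqVneq y s) => [->//|ne]; apply: Hpar => //.
  by rewrite in_setD1 ne.
- by move=> x x' H; rewrite (HG x x' (sub _ _ H)) (Hgs x x' H).
- move=> x x' H; rewrite (HE x x' (sub _ _ H)) (H s) //.
  by rewrite in_setD1 eqxx.
rewrite (big_setD1 s Hs) /= [h s * _]mulrC -mulrA; congr (_ * _).
rewrite big_mkcond (sum_upd _ s (y0 s)) mulr_sumr.
rewrite [in RHS](eq_bigl (fun x : X => (x s == y0 s) && (E x && [forall y in S', x y == y0 y])));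
  last first.
  by move=> x; rewrite (forall_inD1 _ Hs) /=; case: (E x); case: (x s == y0 s).
rewrite big_mkcondr /=; apply: eq_bigr => x /eqP xs.
have ag c : agree_off S (upd x s c) x.
  move=> y Hy; apply: upd_ne; apply: contraNneq Hy => ->; exact: Hs.
have Fe c : [forall y in S', upd x s c y == y0 y] = [forall y in S', x y == y0 y].
  apply: eq_forallb_in => y; rewrite in_setD1 => /andP[ys _]; by rewrite upd_ne.
under eq_bigr => c _ do rewrite (HE _ _ (ag c)) (HG _ _ (ag c)) Fe upd_s.
case Ex: (E x); case Fx: [forall y in S', x y == y0 y]; rewrite /=;
  last 3 first.
all: try by rewrite big1 // => c _; rewrite ?andbF.

have Hpar : forall y, edge par y s -> y \in S -> K y (x y).
  by move=> y e Hy; move: (Hsrc y e); rewrite Hy.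
rewrite -(Hh s x Hs Ex Hpar) mulr_suml [RHS]big_mkcond.
apply: eq_bigr => c _.
by case: (K s c); rewrite /= ?andbT /=; [rewrite mulrC|].
Qed.

End Gen.

Section BN.
Variables (R : realFieldType) (V A B : finType) (k : nat)
  (par : V -> option {ffun 'I_k -> V}) (Q : {ffun 'I_k -> A} -> A -> R).
Notation X := {ffun V -> A}.
Hypothesis hdag : is_dag par.

Definition gg (alpha : V -> A -> R) (w : V) (x : X) : R :=
  match par w with None => alpha w (x w) | Some p => Q [ffun i => x (p i)] (x w) end.

Lemma joint_gg alpha x : joint par alpha Q x = \prod_w gg alpha w x.
Proof. by []. Qed.

Lemma gg_local alpha w (x x' : X) : x w = x' w ->
  (forall y, edge par y w -> x y = x' y) -> gg alpha w x = gg alpha w x'.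
Proof.
rewrite /gg => Hw Hy; case Hp: (par w) => [p|]; rewrite Hw //.
congr Q; apply/ffunP => i; rewrite !ffunE; apply: Hy; by rewrite /edge Hp codom_f.
Qed.

Lemma gg_upd alpha w x c : gg alpha w (upd x w c) =
  match par w with None => alpha w c | Some p => Q [ffun i => x (p i)] c end.
Proof.
rewrite /gg upd_s; case Hp: (par w) => [p|] //.
congr Q; apply/ffunP => i; rewrite !ffunE.
have e : edge par (p i) w by rewrite /edge Hp codom_f.
by rewrite (negPf (edge_neq hdag e)).
Qed.

Lemma gg_nonneg alpha w x : is_init_distr par alpha -> is_kernel Q ->
  0 <= gg alpha w x.
Proof.
move=> ha hq; rewrite /gg; case Hp: (par w) => [p|]; first exact: (hq _).1.
exact: (ha w Hp).1.
Qed.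

Lemma gg_sum1 alpha w x : is_init_distr par alpha -> is_kernel Q ->
  \sum_c gg alpha w (upd x w c) = 1.
Proof.
move=> ha hq; under eq_bigr => c _ do rewrite gg_upd.
case Hp: (par w) => [p|]; first exact: (hq _).2.
exact: (ha w Hp).2.
Qed.

Lemma anc_root (kpos : (0 < k)%N) u :
  exists2 z, par z = None & connect (edge par) z u.
Proof.
have /(source_ex hdag) [s Hs Hsrc] : [set z | connect (edge par) z u] != set0.
  by apply/set0Pn; exists u; rewrite inE connect0.
exists s; last by move: Hs; rewrite inE.
case Hp: (par s) => [p|] //; exfalso.
have e : edge par (p (Ordinal kpos)) s by rewrite /edge Hp codom_f.
move: (Hsrc _ e); rewrite inE; move: Hs; rewrite inE => Hs /negP; apply.
exact: connect_trans (connect1 e) Hs.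
Qed.

Variable f : A -> B.

Lemma sum_fiber (F : A -> R) : \sum_(b : B) \sum_(a | f a == b) F a = \sum_a F a.
Proof. by rewrite [RHS](partition_big f predT). Qed.

End BN.

Theorem mainTheorem14 (R : realFieldType) (V A B : finType) (k : nat)
  (par : V -> option {ffun 'I_k -> V}) (alpha : V -> A -> R)
  (Q : {ffun 'I_k -> A} -> A -> R) (f : A -> B) :
  (0 < k)%N ->
  is_dag par ->
  (forall v p, par v = Some p -> injective p) ->
  (exists v, has_depth par v 1) ->
  is_init_distr par alpha ->
  is_kernel Q ->
  (forall x : {ffun V -> A}, 0 < joint par alpha Q x) ->
  (forall b : B, exists a : A, f a = b) ->
  (D3 par Q f <->
   forall w w' : {ffun 'I_k -> A}, (forall i, f (w i) = f (w' i)) ->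
     forall b : B, \sum_(c | f c == b) Q w c = \sum_(c | f c == b) Q w' c).
Proof.
move=> kpos hd hinj [v0 hdep] hal hQ hfull hsurj.
have sec_ex b : exists a, f a == b by case: (hsurj b) => a <-; exists a.
pose sec b := proj1_sig (sigW (sec_ex b)).
have secK b : f (sec b) = b by rewrite /sec; case: sigW => a /= Ha; exact/eqP.
split.
  case=> _ HD w w' hww' b.
  have [p hp hpar] : exists2 p, par v0 = Some p & forall i, par (p i) = None.
    case: hdep => [[x [s [hx [hpath [hlast hsize]]]]] hmax].
    case Hv: (par v0) => [p|]; last first.
      case: s hpath hlast hsize => [|y [|]] //= /andP [e _] hy _.
      by move: e; rewrite hy /edge Hv.
    exists p => // i; case Hpi: (par (p i)) => [p'|] //; exfalso.
    have [z hz] := anc_root hd kpos (p i).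
    case/connectP => sq pth lst.
    have ev : edge par (p i) v0 by rewrite /edge Hv codom_f.
    have : depth_path par v0 (size sq).+1.
      exists z, (rcons sq v0); split => //; split.
        by rewrite rcons_path pth -lst.
      by rewrite last_rcons size_rcons.
    move/hmax; case: sq pth lst => // _ /= lst.
    by move: hz; rewrite -lst Hpi.
  set v := v0.
  pose bs : {ffun 'I_k -> B} := [ffun i => f (w i)].
  pose alw (w : {ffun 'I_k -> A}) (y : V) (a : A) : R :=
    if [pick i | p i == y] is Some i then (a == w i)%:R else alpha y a.
  pose sQ (w : {ffun 'I_k -> A}) b := \sum_(c | f c == b) Q w c.
  have key (w1 : {ffun 'I_k -> A}) : (forall i, f (w1 i) = bs i) ->
    is_init_distr par (alw w1) /\ exists T, 0 < T /\
      prob par (alw w1) Q (Epa f p bs) = T /\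
      forall b', prob par (alw w1) Q (fun x => Epa f p bs x && (f (x v) == b')) = sQ w1 b' * T.
    move=> hw.
    have hinit : is_init_distr par (alw w1).
      move=> y hy; rewrite /alw; case: pickP => [i _|_]; last exact: hal y hy.
      split; first by move=> a; exact: ler0n.
      by rewrite (bigD1 (w1 i)) //= eqxx big1 ?addr0 // => a /negPf->.
    split => //.
    set P := [set y | [exists i, p i == y]].
    set S := ~: P.
    have vS : v \in S.
      rewrite in_setC inE; apply/existsP => -[i /eqP e].
      have ev : edge par (p i) v by rewrite /edge hp codom_f.
      by move: (edge_neq hd ev); rewrite e eqxx.
    have pS i : p i \notin S by rewrite in_setC negbK inE; apply/existsP; exists i.
    pose Wp (x : {ffun V -> A}) := [forall i, x (p i) == w1 i].
    pose y0 : {ffun V -> A} := [ffun _ => w1 (Ordinal kpos)].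
    pose G (x : {ffun V -> A}) := \prod_(y | y \notin S) gg par Q (alw w1) y x.
    pose T := \sum_(x | Wp x && [forall y in S, x y == y0 y]) G x.
    have zero x : ~~ Wp x -> joint par (alw w1) Q x = 0.
      case/forallPn => i ne; rewrite joint_gg (bigD1 (p i)) //= /gg hpar /alw.
      case: pickP => [j /eqP e|/(_ i)]; last by rewrite eqxx.
      by rewrite (hinj _ _ hp _ _ e) (negPf ne) mul0r.
    have HN b' : prob par (alw w1) Q (fun x => Epa f p bs x && (f (x v) == b')) = sQ w1 b' * T.
      rewrite /prob (bigID Wp) /= [X in _ + X]big1 ?addr0; last first.
        by move=> x /andP[_ nW]; exact: zero.
      transitivity (\sum_(x | Wp x && [forall y in S, (y != v) || (f (x y) == b')])
          G x * \prod_(y in S) gg par Q (alw w1) y x).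
        apply: eq_big => [x|x _]; last first.
          by rewrite joint_gg (bigID (fun y => y \in S)) mulrC.
        case Wx: (Wp x); last by rewrite andbF.
        rewrite andbT /= (forall_inD1 _ vS) eqxx /=.
        have -> : [forall y in S :\ v, (y != v) || (f (x y) == b')].
          by apply/forall_inP=> y; rewrite in_setD1 => /andP[->].
        have -> // : Epa f p bs x.
        apply/forallP => i; move/forallP: Wx => /(_ i) /eqP ->.
        by rewrite hw.
      by rewrite andbT.
      rewrite (@lump V A R k par hd _ (gg_local Q (alw w1)) _ S (erefl _) Wp G
         (fun y c => (y != v) || (f c == b')) (fun y => if y == v then sQ w1 b' else 1) y0);
        first last.
      - move=> s x sS Wx _; case: (eqVneq s v) => [->|ne].
          under eq_bigr => c _ do rewrite (gg_upd _ hd) hp.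
          rewrite (eq_bigl (fun c => f c == b')); last by [].
          rewrite /sQ.
          have -> // : [ffun i0 => x (p i0)] = w1; apply/ffunP => i.
          by rewrite ffunE; move/forallP: Wx => /(_ i) /eqP.
        rewrite (eq_bigl predT); last by [].
        exact: (gg_sum1 hd _ _ hinit hQ).
      - move=> x x' H; apply: eq_bigr => y yS; apply: gg_local; first exact: H.
        move=> z; move: yS; rewrite in_setC negbK inE => /existsP [j /eqP <-].
        by rewrite /edge hpar.
      - by move=> x x' H; apply: eq_forallb => i; rewrite H // pS.
      rewrite (big_setD1 v vS) eqxx big1 /=; first by rewrite mulr1.
      by move=> y; rewrite in_setD1 => /andP[/negPf->].
    have Tpos : 0 < T.
      pose Xs : {ffun V -> A} :=
        [ffun y => if [pick i | p i == y] is Some i then w1 i else y0 y].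
      have HX : Wp Xs && [forall y in S, Xs y == y0 y].
        apply/andP; split.
          apply/forallP => i; rewrite ffunE.
          case: pickP => [j /eqP e|/(_ i)]; last by rewrite eqxx.
          by rewrite (hinj _ _ hp _ _ e).
        apply/forall_inP => y yS; rewrite ffunE.
        case: pickP => [j /eqP e|_] //.
        by move: (pS j); rewrite e yS.
      have GX : G Xs = 1.
        apply: big1 => y; rewrite in_setC negbK inE => /existsP [j /eqP <-].
        rewrite /gg hpar /alw ffunE.
        case: pickP => [j' _|/(_ j)]; first by rewrite eqxx.
        by rewrite eqxx.
      rewrite /T (bigD1 Xs) //= GX; apply: (lt_le_trans ltr01); rewrite lerDl.
      apply: sumr_ge0 => x _; apply: prodr_ge0 => y _.
      exact: gg_nonneg.
    exists T; split => //; split => //.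
    rewrite /prob (partition_big (fun x : {ffun V -> A} => f (x v)) predT) //=.
    under eq_bigr => b'' _ do rewrite -/(prob par (alw w1) Q _) HN.
    by rewrite -mulr_suml /sQ (sum_fiber f) (hQ _).2 mul1r.
  have [h1 [T1 [T1pos [D1 N1]]]] := key w (fun i => esym (ffunE _ _)).
  have [h2 [T2 [T2pos [D2 N2]]]] := key w' (fun i => etrans (esym (hww' i)) (esym (ffunE _ _))).
  have := HD v p hp b bs (alw w) (alw w') h1 h2.
  rewrite D1 D2 N1 N2 !mulfK ?lt0r_neq0 //; first by apply.
move=> HC.
pose qq (ws : {ffun 'I_k -> B}) b := \sum_(c | f c == b) Q [ffun i => sec (ws i)] c.
have lumpQ (w : {ffun 'I_k -> A}) (ws : {ffun 'I_k -> B}) b : (forall i, f (w i) = ws i) ->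
    \sum_(c | f c == b) Q w c = qq ws b.
  move=> hw; apply: HC => i; by rewrite ffunE secK hw.
have qq_sum (ws : {ffun 'I_k -> B}) : \sum_b qq ws b = 1 by rewrite /qq (sum_fiber f) (hQ _).2.
split.
  move=> al' hal'.
  exists (fun v b => \sum_(a | f a == b) al' v a), (fun v ws b => qq ws b).
  split; [|split].
  - move=> v hv; split; last by rewrite (sum_fiber f) (hal' v hv).2.
    by move=> b; apply: sumr_ge0 => a _; exact: (hal' v hv).1.
  - move=> v p hp ws; split; last exact: qq_sum.
    by move=> b; apply: sumr_ge0 => c _; exact: (hQ _).1.
  move=> u; rewrite /prob.
  pose y0 : {ffun V -> A} := [ffun y => sec (u y)].
  have L := @lump V A R k par hd _ (gg_local Q al') _ [set: V] (erefl _) predT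
     (fun _ => 1) (fun y c => f c == u y)
     (fun w => match par w with None => \sum_(a | f a == u w) al' w a
                | Some p => qq [ffun i => u (p i)] (u w) end) y0.
  rewrite (_ : \sum_(x : {ffun V -> A} | [forall v, f (x v) == u v]) joint par al' Q x =
     \sum_(x : {ffun V -> A} | predT x && [forall y in [set: V], f (x y) == u y])
        1 * \prod_(w in [set: V]) gg par Q al' w x); last first.
    apply: eq_big => [x|x _].
      by apply: eq_forallb => y; rewrite in_setT.
    by rewrite mul1r joint_gg; apply: eq_bigl => w; rewrite in_setT.
  rewrite L; first last.
  - move=> s x _ _ Hpar; under eq_bigr => c _ do rewrite (gg_upd _ hd).
    case Hp: (par s) => [p|] //; apply: lumpQ => i.
    rewrite !ffunE; apply/eqP; apply: (Hpar (p i)); rewrite ?in_setT // /edge Hp codom_f.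
  - by [].
  - by [].
  - by [].
  rewrite (big_pred1 y0); last first.
    move=> x /=; apply/forall_inP/eqP => [H|->]; last by move=> y _.
    by apply/ffunP=> y; apply/eqP; apply: H; rewrite in_setT.
  by rewrite mulr1; apply: eq_bigl => w; rewrite in_setT.
move=> v p hp b bs al1 al2 h1 h2 pos1 pos2.
have key al' : is_init_distr par al' -> forall b',
   prob par al' Q (fun x => Epa f p bs x && (f (x v) == b')) =
   qq bs b' * prob par al' Q (Epa f p bs).
  move=> hal'.
  set D := [set w | connect (edge par) v w].
  have vD : v \in D by rewrite inE connect0.
  have paD i : p i \notin D.
    by rewrite inE; apply: hd; rewrite /edge hp codom_f.
  pose y0 : {ffun V -> A} := [ffun _ => sec b].
  pose M := \sum_(x | Epa f p bs x && [forall y in D, x y == y0 y])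
                 \prod_(w | w \notin D) gg par Q al' w x.
  have HN b' : prob par al' Q (fun x => Epa f p bs x && (f (x v) == b')) = qq bs b' * M.
    rewrite /prob.
    transitivity (\sum_(x | Epa f p bs x && [forall y in D, (y != v) || (f (x y) == b')])
        (\prod_(w | w \notin D) gg par Q al' w x) * \prod_(w in D) gg par Q al' w x).
      apply: eq_big => [x|x _].
        rewrite (forall_inD1 _ vD) eqxx /=.
        have -> : [forall y in D :\ v, (y != v) || (f (x y) == b')].
          by apply/forall_inP=> y; rewrite in_setD1 => /andP[->].
        by rewrite andbT.
      by rewrite joint_gg (bigID (fun w => w \in D)) mulrC.
    rewrite (@lump V A R k par hd _ (gg_local Q al') _ D (erefl _) _ _
       (fun y c => (y != v) || (f c == b')) (fun w => if w == v then qq bs b' else 1) y0);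
      first last.
    - move=> s x sD Ex _; case: (eqVneq s v) => [->|ne].
        under eq_bigr => c _ do rewrite (gg_upd _ hd) hp.
        rewrite (eq_bigl (fun c => f c == b')); last by [].
        apply: lumpQ => i; rewrite ffunE; by move/forallP: Ex => /(_ i) /eqP.
      rewrite (eq_bigl predT); last by [].
      exact: (gg_sum1 hd _ _ hal' hQ).
    - move=> x x' H; apply: eq_bigr => w wD; apply: gg_local; first exact: H.
      move=> y e; apply: H; apply: contra wD; rewrite !inE => Hy.
      exact: connect_trans Hy (connect1 e).
    - by move=> x x' H; apply: eq_forallb => i; rewrite H.
    rewrite (big_setD1 v vD) eqxx big1 /=; first by rewrite mulr1.
    by move=> w; rewrite in_setD1 => /andP[/negPf->].
  move=> b'; rewrite HN; congr (_ * _).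
  rewrite /prob (partition_big (fun x : {ffun V -> A} => f (x v)) predT) //=.
  under eq_bigr => b'' _ do rewrite -/(prob par al' Q _) HN.
  by rewrite -mulr_suml qq_sum mul1r.
rewrite !key // !mulfK //; exact: lt0r_neq0.
Qed.
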